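(* Let $X$ be a nonempty set, let $n\geq 1$, and let $f_1,\dots,f_n:X\to\mathbb{R}$ be arbitrary functions. Then there exists $(\lambda_1,\dots,\lambda_n)\in S_n$ such that \[ 0\leq \lambda_1 f_1(x)+\dots+\lambda_n f_n(x)\qquad (x\in X) \] if and only if \[ 0\leq \max_{i\in\{1,\dots,n\}}\big(t_1 f_i(x_1)+\dots+t_n f_i(x_n)\big)\qquad (x_1,\dots,x_n\in X,\ (t_1,\dots,t_n)\in S_n). \]
   Context: For a positive integer $n$, $S_n$ denotes the simplex $\{(\lambda_1,\dots,\lambda_n)\in\mathbb{R}^n \mid \lambda_1,\dots,\lambda_n\geq 0,\ \lambda_1+\dots+\lambda_n=1\}$. *)

(* Defs.v *)
From mathcomp Require Import all_boot all_order all_algebra.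
From mathcomp Require Import reals.
Set Implicit Arguments. Unset Strict Implicit. Unset Printing Implicit Defensive.
Import Order.TTheory GRing.Theory Num.Theory.
Local Open Scope ring_scope.

Definition simplex (R : realType) (n : nat) (l : 'I_n -> R) : Prop :=
  (forall i, 0 <= l i) /\ \sum_(i < n) l i = 1.

Definition maxI (R : realType) (n : nat) (g : 'I_n.+1 -> R) : R :=
  \big[Num.max/g ord0]_(i < n.+1) g i.

(* Main.v *)
Require Import Defs.
From mathcomp Require Import all_boot all_order all_algebra.
From mathcomp Require Import reals.
From mathcomp Require Import classical_sets.
From mathcomp Require Import ring lra zify.
Set Implicit Arguments. Unset Strict Implicit. Unset Printing Implicit Defensive.
Import Order.TTheory GRing.Theory Num.Theory.
Local Open Scope ring_scope.

Lemma split_lsh m n (a : 'I_m) : split (lshift n a) = inl a.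
Proof. exact: (unsplitK (inl _ a)). Qed.
Lemma split_rsh m n (a : 'I_n) : split (rshift m a) = inr a.
Proof. exact: (unsplitK (inr _ a)). Qed.

Section S.
Variable R : realType.
Variable X : Type.

Definition Ssum k n (f : 'I_n -> X -> R) (w : 'I_k -> R) (xs : 'I_k -> X)
  (i : 'I_n) := \sum_(j < k) w j * f i (xs j).
Definition Dk n (f : 'I_n -> X -> R) k := forall (w : 'I_k -> R) xs,
  (forall j, 0 <= w j) -> exists i, 0 <= Ssum f w xs i.

Lemma maxI_ex n (g : 'I_n.+1 -> R) : 0 <= maxI g -> exists i, 0 <= g i.
Proof.
move=> h; case: (boolP [exists i, 0 <= g i]) => [/existsP//|].
rewrite negb_exists => /forallP H; exfalso; move: h.
have : maxI g < 0.
  rewrite /maxI; apply: (big_ind (fun x => x < 0)).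
  - by rewrite ltNge H.
  - by move=> x y hx hy; rewrite gt_max hx hy.
  - by move=> i _; rewrite ltNge H.
by move=> hlt; rewrite leNgt hlt.
Qed.

Lemma maxI_ge n (g : 'I_n.+1 -> R) i : g i <= maxI g.
Proof.
have : forall r : seq 'I_n.+1, i \in r -> g i <= \big[Num.max/g ord0]_(j <- r) g j.
  elim => [//|a r IH]; rewrite in_cons big_cons /= le_max => /orP [/eqP->|/IH->].
    by rewrite lexx.
  by rewrite orbT.
by apply; exact: mem_index_enum.
Qed.

Lemma lin_dep (n k : nat) (c : 'I_k -> 'I_n -> R) : (n < k)%N ->
  exists a : 'I_k -> R, (exists j, a j != 0) /\ forall i, \sum_j a j * c j i = 0.
Proof.
move=> nk; set A := \matrix_(j < k, i < n) c j i.
have : kermx A != 0.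
  rewrite -mxrank_eq0 mxrank_ker subn_eq0 -ltnNge.
  exact: leq_ltn_trans (rank_leq_col A) nk.
case/rowV0Pn => v /sub_kermxP vA /rV0Pn [j vj].
exists (fun j => v 0 j); split; first by exists j.
move=> i; have := congr1 (fun M : 'rV_n => M 0 i) vA; rewrite !mxE => H.
rewrite -[RHS]H /A; apply: eq_bigr => l _; by rewrite mxE.
Qed.

Lemma pad n (f : 'I_n -> X -> R) k (x0 : X) : Dk f k.+1 -> Dk f k.
Proof.
move=> D w xs w0.
have [|i hi] := D (fun i => if unlift ord0 i is Some j then w j else 0)
  (fun i => if unlift ord0 i is Some j then xs j else x0).
  by move=> i; case: (unlift _ _).
exists i; move: hi; rewrite /Ssum big_ord_recl unlift_none mul0r add0r.
by under eq_bigr do rewrite liftK.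
Qed.

Lemma elimD n (f : 'I_n -> X -> R) k : (n <= k)%N -> Dk f k -> Dk f k.+1.
Proof.
move=> nk D w xs w0.
case: (boolP [exists i, 0 <= Ssum f w xs i]) => [/existsP [i hi]|]; first by exists i.
rewrite negb_exists => /forallP H; exfalso.
have [a [[j0 aj0] ha]] := @lin_dep n k.+1 (fun j i => f i (xs j)) nk.
have [b [[j1 bj1] hb]] : exists b : 'I_k.+1 -> R, (exists j, 0 < b j) /\
    forall i, \sum_j b j * f i (xs j) = 0.
  case: (ltP 0 (a j0)) => h; first by exists a; split => //; exists j0.
  exists (fun j => - a j); split.
    by exists j0; rewrite oppr_gt0 lt_neqAle aj0 h.
  by move=> i; under eq_bigr do rewrite mulNr; rewrite sumrN ha oppr0.
case: (@arg_minP _ _ _ j1 (fun j => 0 < b j) (fun j => w j / b j) bj1) => p0 bp0 pmin.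
set e := w p0 / b p0.
have e0 : 0 <= e by rewrite divr_ge0 // ltW.
set w' := fun j => w j - e * b j.
have w'0 : forall j, 0 <= w' j.
  move=> j; rewrite /w' subr_ge0; case: (ltP 0 (b j)) => hbj.
    by have := pmin j hbj; rewrite ler_pdivlMr.
  apply: le_trans (w0 j); exact: mulr_ge0_le0.
have w'p0 : w' p0 = 0 by rewrite /w' /e divfK ?subrr // gt_eqF.
have S' : forall i, Ssum f w' xs i = Ssum f w xs i.
  move=> i; rewrite /Ssum /w'; under eq_bigr do rewrite mulrBl -mulrA.
  by rewrite sumrB -mulr_sumr hb mulr0 subr0.
have [i hi] := D (fun j => w' (lift p0 j)) (fun j => xs (lift p0 j)) (fun j => w'0 _).
move: (H i); rewrite -S' /Ssum (bigD1_ord p0) //= w'p0 mul0r add0r.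
by move/negP; apply.
Qed.

Lemma fromC m (f : 'I_m.+1 -> X -> R) :
  (forall (xs : 'I_m.+1 -> X) (t : 'I_m.+1 -> R), simplex t ->
     0 <= maxI (fun i : 'I_m.+1 => \sum_(j < m.+1) t j * f i (xs j))) ->
  Dk f m.+1.
Proof.
move=> H w xs w0; set s := \sum_j w j.
have s0 : 0 <= s by apply: sumr_ge0.
case: (eqVneq s 0) => hs.
  exists ord0; rewrite /Ssum big1 // => j _.
  by rewrite (psumr_eq0P (fun i _ => w0 i) hs) ?mul0r.
have sp : 0 < s by rewrite lt_def hs s0.
have [|i hi] := maxI_ex (H xs (fun j => w j / s) _).
  split; first by move=> i; rewrite divr_ge0.
  by rewrite -mulr_suml divff.
exists i; move: hi; rewrite /Ssum.
under eq_bigr do rewrite mulrAC.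
by rewrite -mulr_suml pmulr_lge0 // invr_gt0.
Qed.

Lemma allD n (f : 'I_n -> X -> R) (x0 : X) : Dk f n -> forall k, Dk f k.
Proof.
move=> Dn k; case: (leqP k n) => hk.
  have : forall d, Dk f (n - d).
    elim => [|d IH]; first by rewrite subn0.
    case E: (n - d)%N IH => [|e] IH'.
      by have -> : (n - d.+1 = 0)%N by lia.
    have -> : (n - d.+1 = e)%N by lia.
    exact: pad x0 IH'.
  by move/(_ (n - k)%N); rewrite subKn.
have : forall d, Dk f (n + d).
  elim => [|d IH]; first by rewrite addn0.
  by rewrite addnS; apply: elimD IH; exact: leq_addr.
by move/(_ (k - n)%N); rewrite subnKC // ltnW.
Qed.

Definition combW k k' (p : R) (w : 'I_k -> R) (q : R) (w' : 'I_k' -> R) :=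
  fun j : 'I_(k + k') => match split j with inl a => p * w a | inr b => q * w' b end.
Definition combX k k' (xs : 'I_k -> X) (xs' : 'I_k' -> X) :=
  fun j : 'I_(k + k') => match split j with inl a => xs a | inr b => xs' b end.

Lemma Ssum_comb n (f : 'I_n -> X -> R) k k' p w q w' xs xs' i :
  Ssum f (@combW k k' p w q w') (combX xs xs') i =
  p * Ssum f w xs i + q * Ssum f w' xs' i.
Proof.
rewrite /Ssum big_split_ord /= !mulr_sumr; congr (_ + _); apply: eq_bigr => j _;
  by rewrite /combW /combX ?split_lsh ?split_rsh mulrA.
Qed.

Lemma combW_ge0 k k' p w q w' : 0 <= p -> 0 <= q -> (forall j, 0 <= w j) ->
  (forall j, 0 <= w' j) -> forall j, 0 <= @combW k k' p w q w' j.
Proof.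
by move=> p0 q0 w0 w'0 j; rewrite /combW; case: (split j) => a; apply: mulr_ge0.
Qed.

Lemma mainD n : forall (f : 'I_n.+1 -> X -> R), (forall k, Dk f k) ->
  exists l : 'I_n.+1 -> R, simplex l /\ forall x, 0 <= \sum_i l i * f i x.
Proof.
elim: n => [|n IH] f D.
  exists (fun _ => 1); split.
    by split => [i|]; [exact: ler01 | rewrite big_ord1].
  move=> x; have [i hi] := D 1%N (fun _ => 1) (fun _ => x) (fun _ => ler01).
  by move: hi; rewrite /Ssum !big_ord1 (ord1 i).
pose i1 : 'I_n.+2 := lift ord0 ord0.
pose rest (i : 'I_n) : 'I_n.+2 := lift ord0 (lift ord0 i).
pose g (mu : R) : 'I_n.+1 -> X -> R := fun i x =>
  if unlift ord0 i is Some i' then f (lift ord0 (lift ord0 i')) x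
  else mu * f ord0 x + (1 - mu) * f i1 x.
have g0 : forall (mu : R) k (w : 'I_k -> R) (xs : 'I_k -> X), Ssum (g mu) w xs ord0 =
    mu * Ssum f w xs ord0 + (1 - mu) * Ssum f w xs i1.
  move=> mu k w xs; rewrite /Ssum /g unlift_none !mulr_sumr -big_split /=.
  by apply: eq_bigr => j _; ring.
have gl : forall (mu : R) k (w : 'I_k -> R) (xs : 'I_k -> X) i, Ssum (g mu) w xs (lift ord0 i) = Ssum f w xs (rest i).
  by move=> mu k w xs i; rewrite /Ssum /g liftK.
pose bad k (w : 'I_k -> R) xs := (forall j, 0 <= w j) /\
  forall i, Ssum f w xs (rest i) < 0.
have F1 : forall k (w : 'I_k -> R) (xs : 'I_k -> X), @bad k w xs -> 0 <= Ssum f w xs ord0 \/ 0 <= Ssum f w xs i1.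
  move=> k w xs [w0 hr]; have [i hi] := D k w xs w0.
  case: (unliftP ord0 i) hi => [j ->|->]; last by left.
  case: (unliftP ord0 j) => [j' ->|->]; last by right.
  by move=> h; have := hr j'; rewrite ltNge h.
have F2 : forall k (w : 'I_k -> R) (xs : 'I_k -> X) k' (w' : 'I_k' -> R) (xs' : 'I_k' -> X), @bad k w xs -> @bad k' w' xs' ->
    Ssum f w xs ord0 < 0 -> Ssum f w' xs' i1 < 0 ->
    - Ssum f w' xs' i1 / (Ssum f w' xs' ord0 - Ssum f w' xs' i1) <=
      Ssum f w xs i1 / (Ssum f w xs i1 - Ssum f w xs ord0).
  move=> k w xs k' w' xs' b1 b2.
  set U := Ssum f w xs ord0; set V := Ssum f w xs i1.
  set U' := Ssum f w' xs' ord0; set V' := Ssum f w' xs' i1.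
  move=> hU hV'.
  have hV : 0 <= V by case: (F1 _ _ _ b1) => //; rewrite leNgt hU.
  have hU' : 0 <= U' by case: (F1 _ _ _ b2) => // h; move: hV'; rewrite ltNge h.
  have p0 : 0 < U' - V' by lra.
  have q0 : 0 < V - U by lra.
  rewrite leNgt; apply/negP => hlt.
  have key : V * U' < V' * U.
    move: hlt; rewrite ltr_pdivrMr // mulrAC ltr_pdivlMr // => h; nra.
  have [i hi] := D _ (combW (U' - V') w (V - U) w') (combX xs xs')
    (combW_ge0 (ltW p0) (ltW q0) b1.1 b2.1).
  move: hi; rewrite Ssum_comb.
  case: (unliftP ord0 i) => [j ->|->]; last by rewrite -/U -/U'; nra.
  case: (unliftP ord0 j) => [j' ->|->]; last by rewrite -/V -/V'; nra.
  have := b1.2 j'; have := b2.2 j'; rewrite /rest => h2 h1; nra.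
pose E : R -> Prop := fun mu => mu = 0 \/ exists k w xs, @bad k w xs /\
  Ssum f w xs i1 < 0 /\
  mu = - Ssum f w xs i1 / (Ssum f w xs ord0 - Ssum f w xs i1).
have E0 : E 0 by left.
have Eub : forall e, E e -> e <= 1.
  move=> e [->|[k [w [xs [b [hV ->]]]]]]; first exact: ler01.
  have hU : 0 <= Ssum f w xs ord0 by case: (F1 _ _ _ b) => // h; move: hV; rewrite ltNge h.
  by rewrite ler_pdivrMr; lra.
have hsup : has_sup E by split; [exists 0 | exists 1 => e /Eub].
set mu := sup E.
have mu0 : 0 <= mu by apply: sup_upper_bound.
have mu1 : mu <= 1 by apply: ge_sup; [exists 0 | move=> e /Eub].
have Dg : forall k, Dk (g mu) k.
  move=> k w xs w0.
  case: (boolP [exists i', 0 <= Ssum f w xs (rest i')]) => [/existsP [i' hi']|].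
    by exists (lift ord0 i'); rewrite gl.
  rewrite negb_exists => /forallP Hn.
  have b : bad k w xs by split => // i; rewrite ltNge Hn.
  exists ord0; rewrite g0.
  set U := Ssum f w xs ord0; set V := Ssum f w xs i1.
  case: (ltP V 0) => hV.
    have hU : 0 <= U by case: (F1 _ _ _ b) => // h; move: hV; rewrite ltNge h.
    have Ec : E (- V / (U - V)) by right; exists k, w, xs.
    have cmu : - V / (U - V) <= mu by apply: sup_upper_bound.
    have hc : - V / (U - V) * (U - V) = - V by rewrite divfK // gt_eqF //; lra.
    nra.
  case: (leP 0 U) => hU; first nra.
  have hc1 : mu <= V / (V - U).
    apply: ge_sup; first by exists 0.
    move=> e [->|[k' [w' [xs' [b' [hV' ->]]]]]]; first by rewrite divr_ge0 //; lra.
    exact: F2.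
  have hc : V / (V - U) * (V - U) = V by rewrite divfK // gt_eqF //; lra.
  nra.
have [l' [[l'0 l'1] hl']] := IH (g mu) Dg.
pose l (i : 'I_n.+2) := if unlift ord0 i is Some j then
   (if unlift ord0 j is Some j' then l' (lift ord0 j') else l' ord0 * (1 - mu))
   else l' ord0 * mu.
exists l; split; first split.
- move=> i; rewrite /l; case: (unlift _ _) => [j|]; last by apply: mulr_ge0.
  case: (unlift _ _) => [j'|] //; apply: mulr_ge0 => //; lra.
- rewrite !big_ord_recl /l unlift_none liftK unlift_none.
  under eq_bigr do rewrite !liftK.
  move: l'1; rewrite big_ord_recl => h; rewrite -[RHS]h; ring.
- move=> x; have := hl' x.
  rewrite !big_ord_recl /l /g unlift_none liftK unlift_none.
  under eq_bigr do rewrite !liftK.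
  under [in X in _ -> X]eq_bigr do rewrite !liftK.
  rewrite unlift_none => h; apply: le_trans h _; rewrite /i1 le_eqVlt; apply/orP; left; apply/eqP; ring.
Qed.

End S.

(* n >= 1 is encoded as n = m.+1; X nonempty via an inhabitant x0. *)
Theorem theorem2p2 (R : realType) (X : Type) (x0 : X) (m : nat)
    (f : 'I_m.+1 -> X -> R) :
  (exists l : 'I_m.+1 -> R, simplex l /\
     forall x : X, 0 <= \sum_(i < m.+1) l i * f i x)
  <->
  (forall (xs : 'I_m.+1 -> X) (t : 'I_m.+1 -> R), simplex t ->
     0 <= maxI (fun i : 'I_m.+1 => \sum_(j < m.+1) t j * f i (xs j))).
Proof.
split.
- move=> [l [[l0 l1] hl]] xs t [t0 t1].
  set G := fun i => \sum_j t j * f i (xs j).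
  have h1 : 0 <= \sum_i l i * G i.
    rewrite /G; under eq_bigr do rewrite mulr_sumr.
    rewrite exchange_big /=; apply: sumr_ge0 => j _.
    rewrite (_ : \sum_i l i * (t j * f i (xs j)) = t j * \sum_i l i * f i (xs j)).
      exact: mulr_ge0.
    by rewrite mulr_sumr; apply: eq_bigr => i _; rewrite mulrCA.
  apply: le_trans h1 _.
  apply: le_trans (_ : \sum_i l i * maxI G <= _).
    by apply: ler_sum => i _; apply: ler_wpM2l; [exact: l0 | exact: maxI_ge].
  by rewrite -mulr_suml l1 mul1r.
- move=> H; apply: mainD; exact: allD x0 (fromC H).
Qed.
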